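(* Let $m$ be even and let $\mathbb{A}\in T_{m,n}$ be a $Z$ tensor. If $\mathbb{A}$ is a $B$ tensor, then $\mathbb{A}$ is a $P$ tensor. If $\mathbb{A}$ is a $B_0$ tensor, then $\mathbb{A}$ is a $P_0$ tensor.
   Context: $T_{m,n}$ denotes the set of real $m$th order $n$-dimensional tensors $\mathbb{A}=(a_{i_1i_2\ldots i_m})$ with $i_j\in[n]=\{1,\ldots,n\}$. $\mathbb{A}$ is a $Z$ tensor if $a_{i_1\ldots i_m}\le0$ whenever $(i_1,\ldots,i_m)$ is not of the form $(i,\ldots,i)$. For $x\in\mathbb{R}^n$, $(\mathbb{A}x^{m-1})_i=\sum_{i_2,\ldots,i_m=1}^n a_{ii_2\ldots i_m}x_{i_2}\cdots x_{i_m}$. $\mathbb{A}$ is a $P$ tensor if for every nonzero $x\in\mathbb{R}^n$, $\max_{i\in[n]}x_i(\mathbb{A}x^{m-1})_i>0$; it is a $P_0$ tensor if for every nonzero $x\in\mathbb{R}^n$ there is $i\in[n]$ with $x_i\ne0$ and $x_i(\mathbb{A}x^{m-1})_i\ge0$. $\mathbb{A}$ is a $B$ tensor if for all $i\in[n]$, $\sum_{i_2,\ldots,i_m=1}^n a_{ii_2\ldots i_m}>0$ and $\frac{1}{n^{m-1}}\sum_{i_2,\ldots,i_m=1}^n a_{ii_2\ldots i_m}>a_{ij_2\ldots j_m}$ for all $(j_2,\ldots,j_m)\neq(i,\ldots,i)$. $\mathbb{A}$ is a $B_0$ tensor if the same two conditions hold with $\ge$ in place of $>$. *)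

(* Defs.v *)
From HB Require Import structures.
From mathcomp Require Import all_boot all_order all_algebra.
Set Implicit Arguments. Unset Strict Implicit. Unset Printing Implicit Defensive.
Import Order.TTheory GRing.Theory Num.Theory.
Local Open Scope ring_scope.

(* A real m-th order n-dimensional tensor a_{i i2 ... im} is represented as a
   function of the first index i : 'I_n and the remaining (m-1)-tuple
   (i2,...,im) of indices in 'I_n. *)
Definition tensor (R : realFieldType) (m n : nat) :=
  'I_n -> (m.-1).-tuple 'I_n -> R.

Section Tensors.
Variables (R : realFieldType) (m n : nat).

Definition diag_idx (i : 'I_n) (t : (m.-1).-tuple 'I_n) : bool :=
  all (pred1 i) t.

Definition is_Z_tensor (A : tensor R m n) : Prop :=
  forall i t, ~~ diag_idx i t -> A i t <= 0.

Definition tapply (A : tensor R m n) (x : 'I_n -> R) (i : 'I_n) : R :=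
  \sum_(t : (m.-1).-tuple 'I_n) A i t * \prod_(j <- t) x j.

Definition is_P_tensor (A : tensor R m n) : Prop :=
  forall x : 'I_n -> R, (exists k, x k != 0) ->
    exists i, 0 < x i * tapply A x i.

Definition is_P0_tensor (A : tensor R m n) : Prop :=
  forall x : 'I_n -> R, (exists k, x k != 0) ->
    exists i, x i != 0 /\ 0 <= x i * tapply A x i.

Definition row_sum (A : tensor R m n) (i : 'I_n) : R := \sum_t A i t.

Definition is_B_tensor (A : tensor R m n) : Prop :=
  forall i, 0 < row_sum A i /\
    forall t, ~~ diag_idx i t -> A i t < row_sum A i / (n ^ m.-1)%:R.

Definition is_B0_tensor (A : tensor R m n) : Prop :=
  forall i, 0 <= row_sum A i /\
    forall t, ~~ diag_idx i t -> A i t <= row_sum A i / (n ^ m.-1)%:R.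

End Tensors.

(* Main.v *)
Require Import Defs.
From HB Require Import structures.
From mathcomp Require Import all_boot all_order all_algebra.
Import Order.TTheory GRing.Theory Num.Theory.
Local Open Scope ring_scope.

Lemma maxex (R : realFieldType) n (x : 'I_n -> R) (k : 'I_n) :
  exists i, forall j, `|x j| <= `|x i|.
Proof.
case: (@arg_maxP _ _ _ k xpredT (fun j => `|x j|) isT) => i _ H.
by exists i => j; apply: H.
Qed.

Lemma prod_diag (R : realFieldType) n (x : 'I_n -> R) i (s : seq 'I_n) :
  all (pred1 i) s -> \prod_(j <- s) x j = x i ^+ size s.
Proof.
elim: s => [|a s IH] /=; first by rewrite big_nil expr0.
move=> /andP[/eqP -> Hs]; by rewrite big_cons IH // exprS.
Qed.

Lemma prod_bound (R : realFieldType) n (x : 'I_n -> R) M (s : seq 'I_n) :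
  (forall j, `|x j| <= M) -> \prod_(j <- s) `|x j| <= M ^+ size s.
Proof.
move=> HM; elim: s => [|a s IH] /=; first by rewrite big_nil expr0.
rewrite big_cons exprS; apply: ler_pM => //.
by rewrite prodr_ge0.
Qed.

Lemma key (R : realFieldType) (m n : nat) (A : tensor R m n) (x : 'I_n -> R) i :
  (2 <= m)%N -> ~~ odd m -> is_Z_tensor A -> (forall j, `|x j| <= `|x i|) ->
  row_sum A i * `|x i| ^+ m <= x i * tapply A x i.
Proof.
move=> m2 em HZ Hmax.
rewrite /row_sum /tapply mulr_suml mulr_sumr; apply: ler_sum => t _.
have Hm : m = (size t).+1 by rewrite size_tuple prednK // (leq_trans _ m2).
case D: (diag_idx i t).
  rewrite (@prod_diag R n x i t D) mulrCA -exprS -Hm.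
  by rewrite -normrX ger0_norm // exprn_even_ge0.
have HA : A i t <= 0 by apply: HZ; rewrite D.
rewrite mulrCA; apply: ler_wnM2l => //.
apply: le_trans (ler_norm _) _.
rewrite normrM normr_prod {2}Hm exprS; apply: ler_pM => //.
  by rewrite prodr_ge0.
exact: prod_bound.
Qed.

Theorem theorem3p6 (R : realFieldType) (m n : nat) (A : tensor R m n) :
  (2 <= m)%N -> ~~ odd m -> is_Z_tensor A ->
  (is_B_tensor A -> is_P_tensor A) /\ (is_B0_tensor A -> is_P0_tensor A).
Proof.
move=> m2 em HZ; split => HB x [k xk]; have [i Hi] := @maxex R n x k;
  have Hk := @key R m n A x i m2 em HZ Hi;
  have xi0 : x i != 0 by rewrite -normr_gt0 (lt_le_trans _ (Hi k)) // normr_gt0.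
- exists i; apply: lt_le_trans Hk; apply: mulr_gt0; first by case: (HB i).
  by rewrite exprn_gt0 // normr_gt0.
- exists i; split => //; apply: le_trans Hk; apply: mulr_ge0; first by case: (HB i).
  by rewrite exprn_ge0.
Qed.
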